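(* Let lines $L_1,L_2$ of $Y_m$ intersect at a point $z$ with acute angle $\delta$, and let $x,y\in L_1$ lie on the same side of $z$. Let $r_1,r_2$ be rules with distinct orientation values, the orientations chosen so that the rules map farthest from $z$, and suppose the points $r_i(x),r_i(y)\in L_2$ and $r_i(r_j(x)),r_i(r_j(y))\in L_1$ ($i,j\in\{1,2\}$, $i\neq j$) all lie on the same side of $z$. Let $\theta_1,\theta_2\in(0,\pi/2]$ be the projection angles of $r_1,r_2$ and $c_1,c_2$ their separation coefficients. Then $0\le c_1c_2<1$ if and only if $$\frac{\pi-\delta}{2}<\frac{\theta_1+\theta_2}{2}\le\frac{\pi}{2}.$$
   Context: $Y_m\subset\mathbb{R}^2$ is a union of $m\ge3$ pairwise nonparallel, not all concurrent lines. A rule with projection angle $\theta\in(0,\pi/2]$ maps a point $x$ on one line to an intersection point with the target line of a line through $x$ meeting the target line at angle $\theta$; the orientation value selects which of the two such lines is used. For a rule with projection angle $\theta$ mapping points on one side of $z$ on one of $L_1,L_2$ to points on the same side of $z$ on the other line, with orientation chosen to map farthest from $z$, one has $d(r(x),r(y))=c\,d(x,y)$ with separation coefficient $c=\sin(\gamma)/\sin(\theta)$, $\gamma=\pi-\delta-\theta$ (by the law of sines). Thus $c_i=\sin(\pi-\delta-\theta_i)/\sin(\theta_i)$. *)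

(* Defs.v *)
From Stdlib Require Import Reals.
Open Scope R_scope.

(* Third angle of the triangle z, x, r(x): the angle at z is delta (the acute
   angle between L1 and L2), the angle at r(x) is the projection angle theta. *)
Definition third_angle (delta theta : R) : R := PI - delta - theta.

(* Separation coefficient of a rule with projection angle theta between two
   lines meeting at angle delta (orientation chosen to map farthest from z):
   c = sin(gamma)/sin(theta), gamma = pi - delta - theta  (law of sines). *)
Definition sep_coeff (delta theta : R) : R :=
  sin (third_angle delta theta) / sin theta.

(* Main.v *)
Require Import Defs.
From Stdlib Require Import Reals Lra.
Open Scope R_scope.

Lemma key_id (d a b : R) :
  sin (d + a) * sin (d + b) - sin a * sin b = sin d * sin (d + a + b).
Proof.
  replace (d + a + b) with (d + (a + b)) by ring.
  rewrite !sin_plus, cos_plus.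
  pose proof (sin2_cos2 d) as H. unfold Rsqr in H.
  transitivity (sin d * (sin d * (cos a * cos b - sin a * sin b) + cos d * (sin a * cos b + cos a * sin b)) + (sin d * sin d + cos d * cos d - 1) * sin a * sin b).
  - ring.
  - rewrite H. ring.
Qed.

Theorem lemma1 (delta theta1 theta2 : R)
  (Hdelta : 0 < delta < PI / 2)
  (Htheta1 : 0 < theta1 <= PI / 2)
  (Htheta2 : 0 < theta2 <= PI / 2) :
  (0 <= sep_coeff delta theta1 * sep_coeff delta theta2 < 1) <->
  ((PI - delta) / 2 < (theta1 + theta2) / 2 <= PI / 2).
Proof.
  pose proof PI_RGT_0 as HPI.
  unfold sep_coeff, third_angle.
  replace (PI - delta - theta1) with (PI - (delta + theta1)) by ring.
  replace (PI - delta - theta2) with (PI - (delta + theta2)) by ring.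
  rewrite !sin_PI_x.
  assert (S1 : 0 < sin theta1) by (apply sin_gt_0; lra).
  assert (S2 : 0 < sin theta2) by (apply sin_gt_0; lra).
  assert (P1 : 0 < sin (delta + theta1)) by (apply sin_gt_0; lra).
  assert (P2 : 0 < sin (delta + theta2)) by (apply sin_gt_0; lra).
  assert (D : 0 < sin delta) by (apply sin_gt_0; lra).
  pose proof (key_id delta theta1 theta2) as K.
  assert (E : sin (delta + theta1) / sin theta1 * (sin (delta + theta2) / sin theta2) - 1
    = sin delta * sin (delta + theta1 + theta2) / (sin theta1 * sin theta2)).
  { rewrite <- K. field. lra. }
  assert (Q : 0 < sin theta1 * sin theta2) by nra.
  assert (C : 0 <= sin (delta + theta1) / sin theta1 * (sin (delta + theta2) / sin theta2)).
  { apply Rmult_le_pos; apply Rlt_le; apply Rdiv_lt_0_compat; lra. }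
  split.
  - intros [_ H].
    split; [|lra].
    destruct (Rle_or_lt (delta + theta1 + theta2) PI) as [Hle|Hlt]; [|lra].
    exfalso.
    assert (0 <= sin (delta + theta1 + theta2)) by (apply sin_ge_0; lra).
    assert (0 <= sin delta * sin (delta + theta1 + theta2) / (sin theta1 * sin theta2)).
    { unfold Rdiv. apply Rmult_le_pos; [nra|]. apply Rlt_le, Rinv_0_lt_compat; lra. }
    lra.
  - intros [H _]. split; [exact C|].
    assert (sin (delta + theta1 + theta2) < 0) by (apply sin_lt_0; lra).
    assert (sin delta * sin (delta + theta1 + theta2) / (sin theta1 * sin theta2) < 0).
    { unfold Rdiv. apply Rmult_neg_pos; [nra|]. apply Rinv_0_lt_compat; lra. }
    lra.
Qed.
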